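(* Let $r\ge 2$, $n\ge 1$, $k\ge 1$ be integers and $s:[n]\to\{0,1,\dots,r-1\}$. Let $\mathrm{Supp}(s)=\{i\in[n]: s(i)>0\}$ and let $I\subseteq\mathrm{Supp}(s)$ with $|I|\ge k$. Let $C^I$ be the subcomplex of $C_s(n,k,\dots,k)$ ($k$ repeated $r$ times) induced on the vertices $(A_1,\dots,A_r)$ with $I\subseteq A_1$. Define $s'(i)=s(i)-1$ for $i\in I$ and $s'(i)=s(i)$ for $i\notin I$. Then $C^I$ is homotopy equivalent to $C_{s'}(n,k,\dots,k)$ with $k$ repeated $r-1$ times.
   Context: For $m\ge 1$, $t:[n]\to\{0,\dots,m\}$ and integers $k_1,\dots,k_m\ge 0$, the complex $C_t(n,k_1,\dots,k_m)$ has as vertices the $m$-tuples $(A_1,\dots,A_m)$ of subsets of $[n]$ with $|A_j|\ge k_j$ for all $j$ such that each $x\in[n]$ lies in exactly $t(x)$ of the $A_j$; a set of vertices $\{(A_1^i,\dots,A_m^i)\}_{i\in I}$ is a face iff $|\bigcap_{i\in I}A_j^i|\ge k_j$ for all $j$. Homotopy equivalence refers to geometric realizations. *)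

(* Defs.v *)
From HB Require Import structures.
From mathcomp Require Import all_boot all_order all_algebra.
From mathcomp Require Import all_classical all_reals topology.
From mathcomp Require Import Rstruct Rstruct_topology.
From Stdlib Require Import Rdefinitions.

Set Implicit Arguments.
Unset Strict Implicit.
Unset Printing Implicit Defensive.

Import Order.TTheory GRing.Theory Num.Theory.

(* Vertices of C_t(n, k_1, ..., k_m): m-tuples (A_0,...,A_{m-1}) of subsets of
   [n] = 'I_n with |A_j| >= k_j, each x lying in exactly t(x) of the A_j. *)
Definition is_vertex (n m : nat) (t : 'I_n -> nat) (kk : 'I_m -> nat)
  (A : {ffun 'I_m -> {set 'I_n}}) : bool :=
  [forall j, leq (kk j) #|A j|] &&
  [forall x, #|[set j | x \in A j]| == t x].

Definition is_face (n m : nat) (t : 'I_n -> nat) (kk : 'I_m -> nat)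
  (F : {set {ffun 'I_m -> {set 'I_n}}}) : bool :=
  [forall A in F, is_vertex t kk A] &&
  [forall j, leq (kk j) #|\bigcap_(A in F) A j|].

(* Faces of the subcomplex C^I of C_t(n,k_1,...,k_m) induced on the vertices
   with I \subset A_1 (A_1 is the coordinate of index 0). *)
Definition is_face_I (n m : nat) (t : 'I_n -> nat) (kk : 'I_m -> nat)
  (I : {set 'I_n}) (F : {set {ffun 'I_m -> {set 'I_n}}}) : bool :=
  is_face t kk F &&
  [forall A in F, forall j : 'I_m, (val j == 0)%N ==> (I \subset A j)].

Local Open Scope classical_set_scope.
Local Open Scope ring_scope.

(* Geometric realization of a simplicial complex on a finite vertex type V,
   given by its face predicate: points of the standard simplex in R^V whose
   support is a face, with the subspace topology of the product topology. *)
Definition realization (V : finType) (face : {set V} -> bool) : set {ptws V -> R} :=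
  [set x : {ptws V -> R} | (forall v, 0 <= x v) /\ \sum_(v : V) x v = 1 /\
           face [set v | x v != 0]%SET].

Definition homotopic_on (X Y : topologicalType) (A : set X) (B : set Y)
  (f g : X -> Y) : Prop :=
  exists H : R * X -> Y,
    {within `[0%R, 1%R] `*` A, continuous H} /\
    H @` (`[0%R, 1%R] `*` A) `<=` B /\
    (forall x, A x -> H (0, x) = f x) /\
    (forall x, A x -> H (1, x) = g x).

Definition homotopy_equivalent (X Y : topologicalType) (A : set X) (B : set Y)
  : Prop :=
  exists (f : X -> Y) (g : Y -> X),
    {within A, continuous f} /\ f @` A `<=` B /\
    {within B, continuous g} /\ g @` B `<=` A /\
    homotopic_on A A (g \o f) id /\
    homotopic_on B B (f \o g) id.

(* Main.v *)
Require Import Defs.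
From HB Require Import structures.
From mathcomp Require Import all_boot all_order all_algebra.
From mathcomp Require Import all_classical all_reals topology.
From mathcomp Require Import Rstruct Rstruct_topology normedtype.
From mathcomp Require Import ring lra.
From Stdlib Require Import Rdefinitions.
Set Implicit Arguments.
Unset Strict Implicit.
Unset Printing Implicit Defensive.
Import Order.TTheory GRing.Theory Num.Theory.

Lemma card_setE (T : finType) (P : pred T) : #|[set j | P j]| = \sum_j (P j : nat).
Proof.
rewrite -sum1_card big_mkcond /=; apply: eq_bigr => j _; rewrite inE; by case: (P j).
Qed.

Lemma face_sub (n m' : nat) t kk (F G : {set {ffun 'I_m' -> {set 'I_n}}}) :
  G \subset F -> is_face t kk F -> is_face t kk G.
Proof.
move=> GF /andP [/forall_inP hv /forallP hc]; apply/andP; split.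
  apply/forall_inP => A AG; apply: hv; exact: (fintype.subsetP GF).
apply/forallP => j; apply: leq_trans (hc j) _; apply: subset_leq_card.
apply/bigcapsP => A AG; apply: finset.bigcap_inf; exact: (fintype.subsetP GF).
Qed.

Lemma face_I_sub (n m' : nat) t kk I (F G : {set {ffun 'I_m' -> {set 'I_n}}}) :
  G \subset F -> is_face_I t kk I F -> is_face_I t kk I G.
Proof.
move=> GF /andP [hF /forall_inP h0]; apply/andP; split; first exact: face_sub hF.
apply/forall_inP => A AG; exact: h0 (fintype.subsetP GF A AG).
Qed.

Section Comb.
Variables (n m k : nat) (s : 'I_n -> nat) (I : {set 'I_n}).
Hypothesis hs : forall i, (s i < m.+2)%N.
Hypothesis hI : I \subset [set i | (0 < s i)%N].
Hypothesis hk : (k <= #|I|)%N.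

Definition s' : 'I_n -> nat := fun i => if i \in I then (s i).-1 else s i.

Definition pickj (A : {ffun 'I_m.+2 -> {set 'I_n}}) (x : 'I_n) : 'I_m.+1 :=
  odflt ord0 [pick j | x \notin A (lift ord0 j)].
Definition rho (A : {ffun 'I_m.+2 -> {set 'I_n}}) : {ffun 'I_m.+1 -> {set 'I_n}} :=
  [ffun j => A (lift ord0 j) :|: [set x in A ord0 :\: I | pickj A x == j]].
Definition iotaB (B : {ffun 'I_m.+1 -> {set 'I_n}}) : {ffun 'I_m.+2 -> {set 'I_n}} :=
  [ffun j => if unlift ord0 j is Some j' then B j' else I].

Lemma cnt_split (A : {ffun 'I_m.+2 -> {set 'I_n}}) x :
  #|[set j | x \in A j]| = ((x \in A ord0) + #|[set j : 'I_m.+1 | x \in A (lift ord0 j)]|)%N.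
Proof. by rewrite !card_setE big_ord_recl. Qed.

Lemma rho_vertex A : is_vertex s (fun _ : 'I_m.+2 => k) A -> I \subset A ord0 ->
  is_vertex s' (fun _ : 'I_m.+1 => k) (rho A).
Proof.
case/andP => /forallP hsz /forallP hcnt hIA.
apply/andP; split; apply/forallP.
  move=> j; rewrite ffunE; apply: leq_trans (hsz (lift ord0 j)) _.
  exact/subset_leq_card/finset.subsetUl.
move=> x; have := eqP (hcnt x); rewrite cnt_split => hx.
rewrite /s'; case: (boolP (x \in I)) => xI.
  have xA : x \in A ord0 := fintype.subsetP hIA x xI.
  have -> : [set j | x \in rho A j] = [set j | x \in A (lift ord0 j)].
    by apply/setP => j; rewrite !inE ffunE !inE xI /= orbF.
  by rewrite -hx xA.
case: (boolP (x \in A ord0)) => xA; last first.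
  have -> : [set j | x \in rho A j] = [set j | x \in A (lift ord0 j)].
    by apply/setP => j; rewrite !inE ffunE !inE (negbTE xA) /= andbF orbF.
  by rewrite -hx (negbTE xA).
have [j0 /andP [hj0 pj0]] : exists j0, (x \notin A (lift ord0 j0)) && (pickj A x == j0).
  rewrite /pickj; case: pickP => [j0 h|h]; first by exists j0; rewrite h eqxx.
  exfalso.
  have E : [set j | x \in A (lift ord0 j)] = [set: 'I_m.+1].
    by apply/setP => j; rewrite !inE; have := h j; rewrite /=; case: (x \in _).
  move: hx; rewrite E cardsT card_ord xA => hx; have := hs x; rewrite -hx.
  by rewrite ltnn.
have -> : [set j | x \in rho A j] = j0 |: [set j | x \in A (lift ord0 j)].
  apply/setP => j; rewrite !inE ffunE !inE xI xA /= (eqP pj0).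
  by rewrite orbC eq_sym.
by rewrite cardsU1 inE hj0 -hx xA.
Qed.

Lemma iota0 B : iotaB B ord0 = I.
Proof. by rewrite ffunE unlift_none. Qed.
Lemma iotaS B j : iotaB B (lift ord0 j) = B j.
Proof. by rewrite ffunE liftK. Qed.

Lemma iota_vertex B : is_vertex s' (fun _ : 'I_m.+1 => k) B ->
  is_vertex s (fun _ : 'I_m.+2 => k) (iotaB B).
Proof.
case/andP => /forallP hsz /forallP hcnt.
apply/andP; split; apply/forallP.
  move=> j; case: (unliftP ord0 j) => [j'|] ->; first by rewrite iotaS; exact: hsz.
  by rewrite iota0.
move=> x; rewrite cnt_split iota0.
have -> : [set j | x \in iotaB B (lift ord0 j)] = [set j | x \in B j].
  by apply/setP => j; rewrite !inE iotaS.
rewrite (eqP (hcnt x)) /s'; case: ifP => xI //=.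
have : x \in [set i | (0 < s i)%N] := fintype.subsetP hI x xI.
rewrite inE => h; rewrite add1n (prednK h) /=. by [].
Qed.

Lemma rho_iota B : rho (iotaB B) = B.
Proof.
apply/ffunP => j; rewrite ffunE iotaS iota0; apply/setP => x; rewrite !inE.
by case: (x \in I); rewrite /= ?orbF.
Qed.

Lemma rho_face S : is_face_I s (fun _ : 'I_m.+2 => k) I S ->
  is_face s' (fun _ : 'I_m.+1 => k) (rho @: S).
Proof.
case/andP => /andP [/forall_inP hv /forallP hc] /forall_inP h0.
apply/andP; split.
  apply/forall_inP => B /imsetP [A AS ->]; apply: rho_vertex; first exact: hv.
  by have := h0 A AS => /forallP/(_ ord0)/implyP; apply.
apply/forallP => j; apply: leq_trans (hc (lift ord0 j)) _; apply: subset_leq_card.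
apply/bigcapsP => B /imsetP [A AS ->]; rewrite ffunE.
apply: fintype.subset_trans (finset.subsetUl _ _); exact: finset.bigcap_inf.
Qed.

Lemma iota_face S : is_face s' (fun _ : 'I_m.+1 => k) S ->
  is_face_I s (fun _ : 'I_m.+2 => k) I (iotaB @: S).
Proof.
case/andP => /forall_inP hv /forallP hc.
apply/andP; split; first (apply/andP; split).
- apply/forall_inP => A /imsetP [B BS ->]; apply: iota_vertex; exact: hv.
- apply/forallP => j; case: (unliftP ord0 j) => [j'|] ->.
    apply: leq_trans (hc j') _; apply: subset_leq_card.
    by apply/bigcapsP => A /imsetP [B BS ->]; rewrite iotaS; exact: finset.bigcap_inf.
  apply: leq_trans hk _; apply: subset_leq_card.
  by apply/bigcapsP => A /imsetP [B BS ->]; rewrite iota0.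
- apply/forall_inP => A /imsetP [B _ ->]; apply/forallP => j; apply/implyP => /eqP j0.
  have -> : j = ord0 by apply: val_inj.
  by rewrite iota0.
Qed.

Lemma homX_face S : is_face_I s (fun _ : 'I_m.+2 => k) I S ->
  is_face_I s (fun _ : 'I_m.+2 => k) I (S :|: (fun A => iotaB (rho A)) @: S).
Proof.
move=> hS; move: (hS) => /andP [/andP [/forall_inP hv /forallP hc] /forall_inP h0].
have g0 A : A \in S -> I \subset A ord0.
  by move=> AS; have := h0 A AS => /forallP/(_ ord0)/implyP; apply.
apply/andP; split; first (apply/andP; split).
- apply/forall_inP => A /setUP [AS | /imsetP [A' A'S ->]]; first exact: hv.
  apply: iota_vertex; apply: rho_vertex; [exact: hv | exact: g0].
- apply/forallP => j; case: (unliftP ord0 j) => [j'|] ->.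
    apply: leq_trans (hc (lift ord0 j')) _; apply: subset_leq_card.
    apply/bigcapsP => A /setUP [AS | /imsetP [A' A'S ->]]; first exact: finset.bigcap_inf.
    rewrite iotaS ffunE; apply: fintype.subset_trans (finset.subsetUl _ _); exact: finset.bigcap_inf.
  apply: leq_trans hk _; apply: subset_leq_card.
  apply/bigcapsP => A /setUP [AS | /imsetP [A' A'S ->]]; first exact: g0.
  by rewrite iota0.
- apply/forall_inP => A AT; apply/forallP => j; apply/implyP => /eqP j0.
  have -> : j = ord0 by apply: val_inj.
  by case/setUP: AT => [AS | /imsetP [A' A'S ->]]; [exact: g0 | rewrite iota0].
Qed.

End Comb.

Local Open Scope ring_scope.

Local Open Scope classical_set_scope.
Lemma ptws_cont (T : topologicalType) (W : finType) (f : T -> {ptws W -> R}) :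
  (forall w, continuous (fun x => f x w)) -> continuous f.
Proof. move=> H x.
have := (@pointwise_cvgP (discrete_topology W) R (f @ x) (f x) _).
move=> [_ h]. apply: h => w. exact: H.
Qed.

Lemma coord_cont (W : finType) (w : W) : continuous (fun x : {ptws W -> R} => x w).
Proof. exact: (@proj_continuous W (fun _ => R) w). Qed.

Lemma sum_cont (T : topologicalType) (W : Type) (s : seq W) (P : pred W) (g : W -> T -> R) :
  (forall w, continuous (g w)) -> continuous (fun x => \sum_(w <- s | P w) g w x).
Proof.
move=> H; elim: s => [|w s IH].
  by move=> x; under eq_fun do rewrite big_nil; exact: cvg_cst.
have E : (fun x => \sum_(v <- w :: s | P v) g v x) =
  (fun x => (if P w then g w x else 0) + \sum_(v <- s | P v) g v x).
  by apply: funext => y; rewrite big_cons; case: (P w); rewrite ?add0r.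
rewrite E => x.
have h1 : (fun y => if P w then g w y else 0) @ x --> (if P w then g w x else 0 : R^o).
  by case: (P w); [exact: H | exact: cvg_cst].
exact: (@cvgD R R^o _ (nbhs x) _ _ _ _ _ h1 (IH x)).
Qed.

Lemma fst_cont (X Y : topologicalType) : continuous (@fst X Y).
Proof. by move=> [x y]; exact: cvg_fst. Qed.
Lemma snd_cont (X Y : topologicalType) : continuous (@snd X Y).
Proof. by move=> [x y]; exact: cvg_snd. Qed.

Local Close Scope classical_set_scope.

Definition push (V W : finType) (phi : V -> W) (x : V -> R) : W -> R :=
  fun w => \sum_(v | phi v == w) x v.

Lemma push_ge0 (V W : finType) (phi : V -> W) x :
  (forall v, 0 <= x v) -> forall w, 0 <= push phi x w.
Proof. by move=> h w; apply: sumr_ge0 => v _. Qed.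

Lemma push_sum (V W : finType) (phi : V -> W) x :
  \sum_w push phi x w = \sum_v x v.
Proof. by rewrite /push (partition_big phi predT) //. Qed.

Lemma push_supp (V W : finType) (phi : V -> W) x :
  [set w | push phi x w != 0] \subset phi @: [set v | x v != 0].
Proof.
apply/fintype.subsetP => w; rewrite inE => hw; apply/imsetP.
case: (pickP (fun v => (phi v == w) && (x v != 0))) => [v /andP [/eqP <- xv] | h].
  by exists v; rewrite ?inE.
exfalso; move/eqP: hw; apply; apply: big1 => v pv.
by have := h v; rewrite pv /= => /negbFE/eqP.
Qed.

Lemma push_comp (U V W : finType) (phi : V -> W) (psi : U -> V) x :
  push phi (push psi x) = push (fun u => phi (psi u)) x.
Proof.
apply: funext => w; rewrite /push.
rewrite [RHS](partition_big psi (fun v => phi v == w)) //=.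
apply: eq_bigr => v /eqP pv; apply: eq_bigl => u.
by apply/idP/andP => [/eqP puv | [_ ->]//]; rewrite puv pv.
Qed.

Lemma push_ext (V W : finType) (phi phi' : V -> W) x :
  phi =1 phi' -> push phi x = push phi' x.
Proof. by move=> e; apply: funext => w; apply: eq_bigl => v; rewrite e. Qed.

Lemma push_id (V : finType) x : push (fun v : V => v) x = x.
Proof. by apply: funext => w; rewrite /push (big_pred1 w). Qed.

Lemma comb_supp (V : finType) (psi : V -> V) (x : V -> R) (t : R) :
  [set v | (1 - t) * push psi x v + t * x v != 0] \subset
  [set v | x v != 0] :|: psi @: [set v | x v != 0].
Proof.
apply/fintype.subsetP => v; rewrite inE => hv; apply/setUP.
case: (boolP (x v != 0)) => xv; first by left; rewrite inE.
right; apply: (fintype.subsetP (push_supp psi x)); rewrite inE.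
apply/negP => /eqP p0; move: hv; rewrite p0; move/negPn: xv => /eqP ->.
by rewrite !mulr0 addr0 eqxx.
Qed.

Lemma push_cont (T : topologicalType) (V W : finType) (phi : V -> W) (f : T -> {ptws V -> R}) :
  continuous f -> continuous (fun x => (push phi (f x) : {ptws W -> R})).
Proof.
move=> cf; apply: ptws_cont => w; rewrite /push.
apply: (sum_cont (g := fun v x => f x v)) => v.
move=> x; have := continuous_comp (cf x) (@coord_cont V v (f x)); exact.
Qed.

Lemma contD (T : topologicalType) (f g : T -> R) :
  continuous f -> continuous g -> continuous (fun x => f x + g x).
Proof. move=> cf cg x; exact: (@cvgD R R^o _ (nbhs x) _ _ _ _ _ (cf x) (cg x)). Qed.
Lemma contM (T : topologicalType) (f g : T -> R) :
  continuous f -> continuous g -> continuous (fun x => f x * g x).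
Proof. move=> cf cg x; exact: (@cvgM R _ (nbhs x) _ _ _ _ _ (cf x) (cg x)). Qed.
Lemma contB (T : topologicalType) (f g : T -> R) :
  continuous f -> continuous g -> continuous (fun x => f x - g x).
Proof. move=> cf cg x; exact: (@cvgB R R^o _ (nbhs x) _ _ _ _ _ (cf x) (cg x)). Qed.
Lemma contC (T : topologicalType) (c : R) : continuous (fun _ : T => c).
Proof. move=> x; exact: cvg_cst. Qed.

Lemma hom0 (a b : R) : (1 - 0) * a + 0 * b = a.
Proof. by rewrite subr0 mul1r mul0r addr0. Qed.
Lemma hom1 (a b : R) : (1 - 1) * a + 1 * b = b.
Proof. by rewrite subrr mul0r add0r mul1r. Qed.


Local Close Scope ring_scope.

Theorem mainTheorem7 (r n k : nat) (s : 'I_n -> nat) (I : {set 'I_n}) :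
  (2 <= r)%N -> (1 <= n)%N -> (1 <= k)%N ->
  (forall i, s i < r)%N ->
  I \subset [set i | (0 < s i)%N] ->
  (k <= #|I|)%N ->
  homotopy_equivalent
    (realization (is_face_I s (fun _ : 'I_r => k) I))
    (realization (is_face (fun i => if i \in I then (s i).-1 else s i)
                          (fun _ : 'I_r.-1 => k))).
Proof.
move=> hr _ _ hs hI hkI.
case: r hr hs => [|[|m]] // _ hs.
pose rh := @rho n m I. pose io := @iotaB n m I.
exists (fun x => (push rh x : {ptws _ -> R})), (fun y => (push io y : {ptws _ -> R})).
split; [|split; [|split; [|split; [|split]]]].
- apply: continuous_subspaceT; apply: push_cont => x; exact: cvg_id.
- move=> _ [x [x0 [x1 xf]] <-]; split; first exact: push_ge0.
  split; first by rewrite push_sum.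
  apply: face_sub (push_supp _ _) _; exact: (rho_face hs xf).
- apply: continuous_subspaceT; apply: push_cont => x; exact: cvg_id.
- move=> _ [y [y0 [y1 yf]] <-]; split; first exact: push_ge0.
  split; first by rewrite push_sum.
  apply: face_I_sub (push_supp _ _) _; exact: (iota_face hI hkI yf).
- exists (fun p : R * {ptws {ffun 'I_m.+2 -> {set 'I_n}} -> R} =>
     (fun v => (1 - p.1) * push (fun A => io (rh A)) p.2 v + p.1 * p.2 v)%R
       : {ptws _ -> R}).
  split; [|split; [|split]].
  + apply: continuous_subspaceT; apply: ptws_cont => v.
    apply: contD; apply: contM.
    * apply: contB; [exact: contC | exact: fst_cont].
    * have hc : continuous (fun x : {ptws {ffun 'I_m.+2 -> {set 'I_n}} -> R} =>
          (push (fun A => io (rh A)) x : {ptws _ -> R})).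
        by apply: push_cont => x; exact: cvg_id.
      move=> p; have := continuous_comp (@snd_cont _ _ p) (hc p.2).
      move=> h; have := continuous_comp h (@coord_cont _ v _); exact.
    * exact: fst_cont.
    * move=> p; have := continuous_comp (@snd_cont _ _ p) (@coord_cont _ v p.2); exact.
  + move=> _ [[t x] [/= Ht [x0 [x1 xf]]] <-].
    move: Ht; rewrite /= in_itv /= => /andP [t0 t1].
    split; [|split].
    * move=> v; apply: addr_ge0; apply: mulr_ge0.
      - by rewrite subr_ge0.
      - exact: push_ge0.
      - exact: t0.
      - exact: x0.
    * rewrite big_split /= -!mulr_sumr push_sum x1 !mulr1 subrK //.
    * have h1 := comb_supp (fun A => io (rh A)) x t.
      have h2 := homX_face hs hI hkI xf.
      exact: (face_I_sub h1 h2).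
  + move=> x Xx; apply: funext => v /=; rewrite push_comp; exact: hom0.
  + move=> x Xx; apply: funext => v /=; exact: hom1.
- exists (fun p : R * {ptws {ffun 'I_m.+1 -> {set 'I_n}} -> R} => p.2).
  split; [|split; [|split]].
  + apply: continuous_subspaceT; exact: snd_cont.
  + by move=> _ [[t y] [_ Yy] <-].
  + move=> y _ /=; rewrite push_comp (push_ext (phi' := fun v => v)) ?push_id //.
    by move=> B; rewrite /rh /io rho_iota.
  + by [].
Qed.
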